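(* In $D^{2,2,2}$, for every permutation $\{i,j,k\}$ of $\{1,2,3\}$: 1. $a^{ij}_0\supseteq a^{ij}_1\supseteq\cdots\supseteq a^{ij}_n\supseteq\cdots$, and $a^{ij}_n\supseteq x_i+x_j$ for all $n\ge0$; 2. $A^{ij}_0\supseteq A^{ij}_1\supseteq\cdots\supseteq A^{ij}_n\supseteq\cdots$; 3. $x_kA^{ij}_n=x_ka^{ji}_n$ for all $n\ge0$; 4. $A^{ij}_n=y_i+x_ja^{ik}_{n-1}$ for all $n\ge1$; 5. $y_iy_jA^{ki}_n=y_iy_ja^{ik}_n$ for all $n\ge0$; 6. $y_ia^{ij}_{n+1}=y_i(x_i+y_jA^{kj}_n)$ for all $n\ge0$.
   Context: $D^{2,2,2}$ is the modular lattice generated by $x_1,y_1,x_2,y_2,x_3,y_3$ subject only to $x_i\subseteq y_i$ ($i=1,2,3$), with a greatest element $I$ adjoined. Meet is written $ab$, join $a+b$, order $\subseteq$. Atomic elements: for distinct $i,j$, let $k$ denote the third index. Define - $a^{ij}_0=I$ and $a^{ij}_n=x_i+y_ja^{jk}_{n-1}$ for $n\ge1$; - $A^{ij}_0=I$ and $A^{ij}_n=y_i+x_jA^{ki}_{n-1}$ for $n\ge1$. *)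

(* Defs.v *)
From HB Require Import structures.
From mathcomp Require Import all_boot all_order.
Set Implicit Arguments. Unset Strict Implicit. Unset Printing Implicit Defensive.
Import Order.TTheory.
Local Open Scope order_scope.

Definition modular_lattice {d} (L : latticeType d) : Prop :=
  forall a b c : L, a <= c -> a `|` (b `&` c) = (a `|` b) `&` c.

(* For distinct i j in {0,1,2}, the third index k. *)
Definition third (i j : 'I_3) : 'I_3 := inord (3 - i - j).

Section Atomic.
Context {d : Order.disp_t} {L : tLatticeType d} (x y : 'I_3 -> L).

Fixpoint a_at (n : nat) (i j : 'I_3) : L :=
  match n with
  | 0 => \top
  | n'.+1 => x i `|` (y j `&` a_at n' j (third i j))
  end.

Fixpoint A_at (n : nat) (i j : 'I_3) : L :=
  match n with
  | 0 => \top
  | n'.+1 => y i `|` (x j `&` A_at n' (third i j) i)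
  end.
End Atomic.

(* Main.v *)
Require Import Defs.
From HB Require Import structures.
From mathcomp Require Import all_boot all_order.
Import Order.TTheory.
Local Open Scope order_scope.

Lemma third_facts (i j : 'I_3) : i != j ->
  (third j i = third i j /\ third i (third i j) = j /\ third (third i j) i = j) /\
  (third j (third i j) = i /\ third (third i j) j = i) /\
  (third i j != i /\ third i j != j).
Proof.
case: i j => [[|[|[|m]]] hi] [[|[|[|n]]] hj] //= _.
all: rewrite /third /=.
all: (repeat split); try apply/val_inj.
all: rewrite ?(@inordK 2 (3-0-1)) ?(@inordK 2 (3-0-2)) ?(@inordK 2 (3-1-0)) ?(@inordK 2 (3-1-2)) ?(@inordK 2 (3-2-0)) ?(@inordK 2 (3-2-1)) //=.
all: rewrite ?inordK //.
all: apply/eqP=> /(congr1 val); rewrite /= inordK.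
all: by [move/eqP|].
Qed.

Arguments third_facts {i j}.

Section Main.
Context (d : Order.disp_t) (L : tLatticeType d)
  (Lmod : modular_lattice L) (x y : 'I_3 -> L)
  (hxy : forall i, x i <= y i).

Local Notation a := (a_at x y).
Local Notation A := (A_at x y).

Lemma swapL (z w u v : L) : z <= w ->
  z `&` (u `|` (v `&` w)) = z `&` (v `|` (u `&` w)).
Proof.
move=> /meet_idPl zw.
have E (p q : L) : w `&` (p `|` (q `&` w)) = (q `&` w) `|` (p `&` w).
  by rewrite (Lmod (q `&` w) p w (leIr w q)) meetC joinC.
by rewrite -zw -!meetA E E joinC.
Qed.

Lemma modl (p q t : L) : p <= q -> q `&` (p `|` t) = p `|` (q `&` t).
Proof. by move=> h; rewrite meetC (meetC q t) (Lmod p t q h). Qed.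

Lemma monoa n p q : a n.+1 p q <= a n p q.
Proof.
elim: n p q => [|n IH] p q; first exact: lex1.
by apply: leU2 => //; apply: leI2 => //; apply: IH.
Qed.

Lemma monoA n p q : A n.+1 p q <= A n p q.
Proof.
elim: n p q => [|n IH] p q; first exact: lex1.
by apply: leU2 => //; apply: leI2 => //; apply: IH.
Qed.

Lemma lowa n p q : p != q -> x p `|` x q <= a n p q.
Proof.
elim: n p q => [|n IH] p q hpq; first exact: lex1.
have [_ [_ [_ hr]]] := third_facts hpq.
rewrite /= leUx leUl /=.
apply: le_trans (leUr _ _).
rewrite lexI hxy /=.
apply: le_trans (IH _ _ _); first exact: leUl.
by rewrite eq_sym.
Qed.

Lemma item3 n p q : p != q ->
  x (third p q) `&` A n p q = x (third p q) `&` a n q p.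
Proof.
elim: n p q => [|n IH] p q hpq //=.
have [[e1 [e2 e3]] [[e4 e5] [hr1 hr2]]] := third_facts hpq.
have hrp : third p q != p by [].
have := IH _ _ hrp; rewrite e3 => ->; rewrite e1.
rewrite swapL //.
apply: le_trans (leUr _ (x p)) (lowa n p (third p q) _).
by rewrite eq_sym.
Qed.

Lemma lowA n p q : y p <= A n.+1 p q.
Proof. exact: leUl. Qed.

Lemma item5 n p q : p != q ->
  (y p `&` y q) `&` A n (third p q) p = (y p `&` y q) `&` a n p (third p q).
Proof.
elim: n p q => [|n IH] p q hpq //=.
have [[e1 [e2 e3]] [[e4 e5] [hr1 hr2]]] := third_facts hpq.
rewrite e3 e2.
set r := third p q.
have hW : y p `&` y q <= A n q r.
  case: n {IH} => [|n]; first exact: lex1.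
  exact: le_trans (leIr _ _) (lowA _ _ _).
rewrite swapL //.
have hrp : r != p by [].
have := IH r p hrp.
rewrite /r e3 -/r => IH'.
rewrite (meetC (y p) (y q)) -!meetA !(modl (x p) (y p) _ (hxy p)).
by rewrite !(meetA (y p) (y r)) (meetC (y p) (y r)) IH'.
Qed.
End Main.

Theorem mainTheorem7 (d : Order.disp_t) (L : tLatticeType d)
  (Lmod : modular_lattice L) (x y : 'I_3 -> L)
  (hxy : forall i, x i <= y i) (i j : 'I_3) (hij : i != j) :
  let k := third i j in
  let a := a_at x y in
  let A := A_at x y in
  ((forall n, a n.+1 i j <= a n i j) /\ (forall n, x i `|` x j <= a n i j)) /\
  (forall n, A n.+1 i j <= A n i j) /\
  (forall n, x k `&` A n i j = x k `&` a n j i) /\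
  (forall n, A n.+1 i j = y i `|` (x j `&` a n i k)) /\
  (forall n, (y i `&` y j) `&` A n k i = (y i `&` y j) `&` a n i k) /\
  (forall n, y i `&` a n.+1 i j = y i `&` (x i `|` (y j `&` A n k j))).
Proof.
move=> k a A.
have [[e1 [e2 e3]] [[e4 e5] [hr1 hr2]]] := third_facts hij.
split; [split|split; [|split; [|split; [|split]]]] => n.
- exact: monoa.
- exact: lowa.
- exact: monoA.
- exact: item3.
- rewrite /A /=; congr (_ `|` _).
  have := @item3 _ _ Lmod _ _ hxy n (third i j) i hr1; rewrite e3 => ->. by [].
- exact: item5.
- rewrite /a /A /= !(@modl _ _ Lmod (x i) (y i) _ (hxy i)).
  have hji : j != i by rewrite eq_sym.
  have := @item5 _ _ Lmod _ _ hxy n j i hji; rewrite e1 -/k => H.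
  by rewrite !(meetA (y i) (y j)) (meetC (y i) (y j)) H.
Qed.
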